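(* Let $|q|<1$ and let $(\alpha_n(a,k,q),\beta_n(a,k,q))$ be a WP-Bailey pair. Assume $|qa|<|z|$, that no denominator vanishes, and that all series below converge absolutely. Then \begin{multline*} \sum_{n=1}^{\infty} \frac{(q\sqrt{k},-q\sqrt{k},z;q)_{n}(q;q)_{n-1}}{(\sqrt{k},-\sqrt{k}, q k,q k/z;q)_{n}}\left( \frac{q a}{ z }\right)^{n} \beta_n(a,k,q) - \sum_{n=1}^{\infty}\frac{(z;q)_{n}(q;q)_{n-1}}{(q a ,q a/z;q)_n}\left (\frac{q a}{z}\right)^{n}\alpha_n(a,k,q)\\ =\sum_{n=1}^{\infty} \frac{(q\sqrt{k},-q\sqrt{k},k,z,k/a;q)_{n}}{(\sqrt{k},-\sqrt{k}, q k,q k/z,q a;q)_{n}(1-q^n)}\left( \frac{q a}{z }\right )^{n}. \end{multline*}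
   Context: Notation: $(x;q)_n=(1-x)(1-xq)\cdots(1-xq^{n-1})$, $(x;q)_0=1$, $(x;q)_\infty=\prod_{j\ge0}(1-xq^j)$, and $(x_1,\dots,x_m;q)_n=(x_1;q)_n\cdots(x_m;q)_n$. A WP-Bailey pair (with parameters $a,k$ and base $q$) is a pair of sequences $(\alpha_n(a,k,q),\beta_n(a,k,q))_{n\ge0}$ with $\alpha_0=\beta_0=1$ and, for $n>0$, $$\beta_n(a,k,q)=\sum_{j=0}^{n}\frac{(k/a;q)_{n-j}(k;q)_{n+j}}{(q;q)_{n-j}(aq;q)_{n+j}}\alpha_j(a,k,q).$$ *)

(* Defs.v *)
From Stdlib Require Import Reals.
Open Scope R_scope.

Definition CC : Type := (R * R)%type.
Definition RtoC (x : R) : CC := (x, 0).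
Definition Czero : CC := (0, 0).
Definition Cone : CC := (1, 0).
Definition Cadd (z w : CC) : CC := (fst z + fst w, snd z + snd w).
Definition Copp (z : CC) : CC := (- fst z, - snd z).
Definition Csub (z w : CC) : CC := Cadd z (Copp w).
Definition Cmul (z w : CC) : CC :=
  (fst z * fst w - snd z * snd w, fst z * snd w + snd z * fst w).
Definition Cinv (z : CC) : CC :=
  (fst z / (fst z ^ 2 + snd z ^ 2), - snd z / (fst z ^ 2 + snd z ^ 2)).
Definition Cdiv (z w : CC) : CC := Cmul z (Cinv w).
Definition Cnorm (z : CC) : R := sqrt (fst z ^ 2 + snd z ^ 2).
Fixpoint Cpow (z : CC) (n : nat) : CC :=
  match n with O => Cone | S m => Cmul (Cpow z m) z end.

Fixpoint Cpartial (f : nat -> CC) (n : nat) : CC :=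
  match n with O => Czero | S m => Cadd (Cpartial f m) (f m) end.

Definition Cseries_lim (f : nat -> CC) (l : CC) : Prop :=
  forall eps : R, eps > 0 -> exists N : nat, forall n : nat,
    (n >= N)%nat -> Cnorm (Csub (Cpartial f n) l) < eps.

Definition Cabs_conv (f : nat -> CC) : Prop :=
  exists l : R, infinite_sum (fun n => Cnorm (f n)) l.

Fixpoint qpoch (x q : CC) (n : nat) : CC :=
  match n with
  | O => Cone
  | S m => Cmul (qpoch x q m) (Csub Cone (Cmul x (Cpow q m)))
  end.

Definition WP_Bailey_pair (a k q : CC) (alpha beta : nat -> CC) : Prop :=
  alpha O = Cone /\ beta O = Cone /\
  forall n : nat, (0 < n)%nat ->
    beta n = Cpartial (fun j =>
       Cmul (Cdiv (Cmul (qpoch (Cdiv k a) q (n - j)) (qpoch k q (n + j)))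
                  (Cmul (qpoch q q (n - j)) (qpoch (Cmul a q) q (n + j))))
            (alpha j)) (S n).

(* Main.v *)
Require Import Defs.
From Stdlib Require Import Reals Lra Lia Field.
From Coquelicot Require Complex.
Open Scope R_scope.

Lemma CC_field_th : field_theory Czero Cone Cadd Cmul Csub Copp Cdiv Cinv (@eq CC).
Proof. exact Complex.C_field_theory. Qed.
Add Field CCfield : CC_field_th.

Lemma CC_eq (z w : CC) : fst z = fst w -> snd z = snd w -> z = w.
Proof. destruct z, w; simpl; intros; subst; reflexivity. Qed.

Lemma Cone_neq0 : Cone <> Czero.
Proof. intro H. injection H. lra. Qed.

Lemma Cmul_nz (z w : CC) : z <> Czero -> w <> Czero -> Cmul z w <> Czero.
Proof.
  intros Hz Hw H.
  assert (E : Cmul (Cmul z w) (Cmul (Cinv z) (Cinv w)) = Cone) by (field; auto).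
  rewrite H in E. apply Cone_neq0. rewrite <- E. apply CC_eq; simpl; ring.
Qed.

Lemma Cpow_add (q : CC) n m : Cpow q (n + m) = Cmul (Cpow q n) (Cpow q m).
Proof. induction m as [|m IH]; simpl.
  - rewrite Nat.add_0_r. field.
  - rewrite Nat.add_succ_r. simpl. rewrite IH. field.
Qed.

Lemma test (a b : CC) : b <> Czero -> Cmul (Cdiv a b) b = a.
Proof. intros. field. auto. Qed.

Lemma qp_S x q n : qpoch x q (S n) = Cmul (qpoch x q n) (Csub Cone (Cmul x (Cpow q n))).
Proof. reflexivity. Qed.

Lemma qp_add x q n m : qpoch x q (n + m) = Cmul (qpoch x q n) (qpoch (Cmul x (Cpow q n)) q m).
Proof.
  induction m as [|m IH].
  - rewrite Nat.add_0_r. simpl. field.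
  - rewrite Nat.add_succ_r, !qp_S, IH, Cpow_add. field.
Qed.

Lemma qp_front x q n : qpoch x q (S n) = Cmul (Csub Cone x) (qpoch (Cmul x q) q n).
Proof.
  change (S n) with (1 + n)%nat. rewrite qp_add. simpl.
  replace (Cmul x (Cmul Cone q)) with (Cmul x q) by field. f_equal. field.
Qed.

Lemma qp_nz_factor x q : (forall n, qpoch x q n <> Czero) ->
  forall l, Csub Cone (Cmul x (Cpow q l)) <> Czero.
Proof.
  intros H l E. apply (H (S l)). rewrite qp_S, E. field.
Qed.


Lemma qp_nz_of x q n : (forall l, Csub Cone (Cmul x (Cpow q l)) <> Czero) -> qpoch x q n <> Czero.
Proof.
  intro H. induction n as [|n IH]; simpl.
  - apply Cone_neq0.
  - apply Cmul_nz; auto.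
Qed.

Lemma qp_tail_nz x q : (forall n, qpoch x q n <> Czero) ->
  forall e p, qpoch (Cmul x (Cpow q e)) q p <> Czero.
Proof.
  intros H e p. apply qp_nz_of. intro l.
  replace (Cmul (Cmul x (Cpow q e)) (Cpow q l)) with (Cmul x (Cpow q (e + l))).
  - apply qp_nz_factor; auto.
  - rewrite Cpow_add. field.
Qed.

Lemma qp_arg x y q n : x = y -> qpoch x q n = qpoch y q n.
Proof. intros ->. reflexivity. Qed.

Lemma Cn_mul z w : Cnorm (Cmul z w) = Cnorm z * Cnorm w.
Proof. exact (Complex.Cmod_mult z w). Qed.
Lemma Cn_add z w : Cnorm (Cadd z w) <= Cnorm z + Cnorm w.
Proof. exact (Complex.Cmod_triangle z w). Qed.
Lemma Cn_ge0 z : 0 <= Cnorm z.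
Proof. exact (Complex.Cmod_ge_0 z). Qed.
Lemma Cn_opp z : Cnorm (Copp z) = Cnorm z.
Proof. exact (Complex.Cmod_opp z). Qed.
Lemma Cn_one : Cnorm Cone = 1.
Proof. exact Complex.Cmod_1. Qed.
Lemma Cn_zero : Cnorm Czero = 0.
Proof. exact Complex.Cmod_0. Qed.
Lemma Cn_eq0 z : Cnorm z = 0 -> z = Czero.
Proof. exact (Complex.Cmod_eq_0 z). Qed.
Lemma Cn_div z w : w <> Czero -> Cnorm (Cdiv z w) = Cnorm z / Cnorm w.
Proof. exact (Complex.Cmod_div z w). Qed.
Lemma Cn_pos z : z <> Czero -> 0 < Cnorm z.
Proof. intro H. destruct (Cn_ge0 z) as [h|h]; auto. exfalso. apply H, Cn_eq0. auto. Qed.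
Lemma Cn_sub z w : Cnorm (Csub z w) <= Cnorm z + Cnorm w.
Proof. unfold Csub. rewrite <- (Cn_opp w). apply Cn_add. Qed.
Lemma Cn_sub_ge z w : Cnorm z - Cnorm w <= Cnorm (Csub z w).
Proof.
  assert (E : z = Cadd (Csub z w) w) by field.
  pose proof (Cn_add (Csub z w) w). rewrite <- E in H. lra.
Qed.
Lemma Cn_pow z n : Cnorm (Cpow z n) = Cnorm z ^ n.
Proof. induction n; simpl. apply Cn_one. rewrite Cn_mul, IHn. ring. Qed.
Lemma Cn_inv_le z K : z <> Czero -> 0 < K -> K <= Cnorm z -> Cnorm (Cdiv Cone z) <= / K.
Proof.
  intros Hz HK H. rewrite Cn_div, Cn_one by auto. unfold Rdiv. rewrite Rmult_1_l.
  apply Rinv_le_contravar; auto.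
Qed.

Fixpoint rgeo (r : R) (n : nat) : R := match n with O => 0 | S m => rgeo r m + r ^ m end.

Lemma rgeo_le r n : 0 <= r < 1 -> rgeo r n <= / (1 - r).
Proof.
  intro Hr. assert (E : forall n, rgeo r n * (1 - r) = 1 - r ^ n).
  { induction n0; simpl. ring. rewrite Rmult_plus_distr_r, IHn0. ring. }
  assert (0 < 1 - r) by lra.
  apply Rmult_le_reg_r with (1 - r); auto. rewrite E, Rinv_l by lra.
  pose proof (pow_le r n ltac:(lra)). lra.
Qed.

Lemma rgeo_ge0 r n : 0 <= r -> 0 <= rgeo r n.
Proof. intro. induction n; simpl. lra. pose proof (pow_le r n H). lra. Qed.

Lemma one_plus_exp t : 0 <= t -> 1 + t <= exp t.
Proof. intro. destruct (Req_dec t 0). subst. rewrite exp_0. lra. left. apply exp_ineq1. auto. Qed.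

Lemma qp_ub_aux w q n : Cnorm q < 1 ->
  Cnorm (qpoch w q n) <= exp (Cnorm w * rgeo (Cnorm q) n).
Proof.
  intro hq. induction n as [|n IH]; simpl.
  - rewrite Cn_one, Rmult_0_r, exp_0. lra.
  - rewrite Cn_mul. rewrite Rmult_plus_distr_l, exp_plus.
    apply Rmult_le_compat; try apply Cn_ge0; auto.
    eapply Rle_trans. apply Cn_sub. rewrite Cn_one, Cn_mul, Cn_pow.
    apply one_plus_exp. apply Rmult_le_pos; [apply Cn_ge0|apply pow_le, Cn_ge0].
Qed.

Definition Ub (w q : CC) : R := exp (Cnorm w / (1 - Cnorm q)).

Lemma exp_mono x y : x <= y -> exp x <= exp y.
Proof. intro H. destruct H. left. apply exp_increasing; auto. subst. lra. Qed.

Lemma qp_ub_le w' w q n : Cnorm q < 1 -> Cnorm w' <= Cnorm w -> Cnorm (qpoch w' q n) <= Ub w q.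
Proof.
  intros hq hw. eapply Rle_trans. apply qp_ub_aux; auto. unfold Ub.
  apply exp_mono. unfold Rdiv. pose proof (Cn_ge0 q).
  apply Rmult_le_compat; auto.
  apply Cn_ge0. apply rgeo_ge0, Cn_ge0. apply rgeo_le. lra.
Qed.

Lemma qp_ub w q n : Cnorm q < 1 -> Cnorm (qpoch w q n) <= Ub w q.
Proof. intro. apply qp_ub_le; auto. lra. Qed.

Lemma Cn_tail_le w q e : Cnorm q < 1 -> Cnorm (Cmul w (Cpow q e)) <= Cnorm w.
Proof.
  intro hq. rewrite Cn_mul, Cn_pow. pose proof (Cn_ge0 w). pose proof (Cn_ge0 q).
  assert (Cnorm q ^ e <= 1 ^ e) by (apply pow_incr; lra). rewrite pow1 in H1.
  nra.
Qed.

Lemma qp_tail_ub w q e n : Cnorm q < 1 -> Cnorm (qpoch (Cmul w (Cpow q e)) q n) <= Ub w q.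
Proof. intro. apply qp_ub_le; auto. apply Cn_tail_le; auto. Qed.

Lemma Ub_pos w q : 0 < Ub w q.
Proof. apply exp_pos. Qed.

Lemma exp_m2t t : 0 <= t <= 1/2 -> exp (-2 * t) <= 1 - t.
Proof.
  intro H. assert (E : exp (-2 * t) * exp (2 * t) = 1).
  { rewrite <- exp_plus. replace (-2 * t + 2 * t) with 0 by ring. apply exp_0. }
  pose proof (one_plus_exp (2 * t) ltac:(lra)).
  pose proof (exp_pos (-2 * t)).
  assert (exp (-2 * t) * (1 + 2 * t) <= 1) by nra.
  nra.
Qed.

Lemma qp_lb_small v q p : Cnorm q < 1 -> Cnorm v <= 1/2 ->
  exp (-2 * (Cnorm v * rgeo (Cnorm q) p)) <= Cnorm (qpoch v q p).
Proof.
  intros hq hv. pose proof (Cn_ge0 q). pose proof (Cn_ge0 v).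
  induction p as [|p IH]; simpl.
  - rewrite Rmult_0_r, Rmult_0_r, exp_0, Cn_one. lra.
  - rewrite Cn_mul. replace (-2 * (Cnorm v * (rgeo (Cnorm q) p + Cnorm q ^ p)))
      with (-2 * (Cnorm v * rgeo (Cnorm q) p) + -2 * (Cnorm v * Cnorm q ^ p)) by ring.
    rewrite exp_plus. apply Rmult_le_compat; try (left; apply exp_pos); auto.
    assert (Hp : 0 <= Cnorm q ^ p <= 1).
    { split. apply pow_le; lra. assert (Cnorm q ^ p <= 1 ^ p) by (apply pow_incr; lra).
      rewrite pow1 in H1. auto. }
    eapply Rle_trans. apply exp_m2t. split. nra. nra.
    eapply Rle_trans. 2: apply Cn_sub_ge. rewrite Cn_one, Cn_mul, Cn_pow. lra.
Qed.

Lemma small_exists w q : Cnorm q < 1 -> exists N, Cnorm w * Cnorm q ^ N <= 1/2.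
Proof.
  intro hq. pose proof (Cn_ge0 w). pose proof (Cn_ge0 q).
  destruct (Req_dec (Cnorm w) 0) as [E|E].
  - exists 0%nat. rewrite E. lra.
  - assert (Hw : 0 < Cnorm w) by lra.
    destruct (pow_lt_1_zero (Cnorm q) ltac:(rewrite Rabs_pos_eq; lra) (/ (2 * Cnorm w)))
      as [N HN]. apply Rinv_0_lt_compat; lra.
    exists N. specialize (HN N (le_n N)). rewrite Rabs_pos_eq in HN by (apply pow_le; lra).
    apply Rmult_lt_compat_l with (r := Cnorm w) in HN; auto.
    assert (Cnorm w * / (2 * Cnorm w) = 1/2) by (field; lra). lra.
Qed.

Lemma qp_lb_fin w q N : (forall n, qpoch w q n <> Czero) ->
  exists k, 0 < k /\ forall n, (n <= N)%nat -> k <= Cnorm (qpoch w q n).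
Proof.
  intro H. induction N as [|N IH].
  - exists 1. split. lra. intros n Hn. inversion Hn. simpl. rewrite Cn_one. lra.
  - destruct IH as [k [Hk Hn]]. exists (Rmin k (Cnorm (qpoch w q (S N)))). split.
    + apply Rmin_glb_lt; auto. apply Cn_pos; auto.
    + intros n Hle. destruct (Nat.eq_dec n (S N)) as [->|Ne].
      * apply Rmin_r.
      * eapply Rle_trans. apply Rmin_l. apply Hn. lia.
Qed.

Lemma qp_lb w q : Cnorm q < 1 -> (forall n, qpoch w q n <> Czero) ->
  exists k, 0 < k /\ forall n, k <= Cnorm (qpoch w q n).
Proof.
  intros hq H. pose proof (Cn_ge0 q).
  destruct (small_exists w q hq) as [N HN].
  destruct (qp_lb_fin w q N H) as [k [Hk Hfin]].
  set (k0 := exp (-2 * (1/2 * / (1 - Cnorm q)))).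
  assert (Hk0 : 0 < k0 <= 1).
  { split. apply exp_pos. unfold k0. apply Rle_trans with (exp 0); [|rewrite exp_0; lra].
    apply exp_mono.
    assert (0 < / (1 - Cnorm q)) by (apply Rinv_0_lt_compat; lra). lra. }
  exists (k * k0). split. nra.
  intro n. destruct (Compare_dec.le_lt_dec n N) as [Hle|Hlt].
  - specialize (Hfin n Hle). nra.
  - replace n with (N + (n - N))%nat by lia. rewrite qp_add, Cn_mul.
    apply Rmult_le_compat; try lra. apply Hfin; lia.
    eapply Rle_trans. 2: apply qp_lb_small; auto.
    + unfold k0. apply exp_mono.
      assert (0 <= Cnorm (Cmul w (Cpow q N)) * rgeo (Cnorm q) (n - N) <= 1/2 * / (1 - Cnorm q)).
      { split. apply Rmult_le_pos. apply Cn_ge0. apply rgeo_ge0; lra.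
        apply Rmult_le_compat. apply Cn_ge0. apply rgeo_ge0; lra.
        rewrite Cn_mul, Cn_pow; auto. apply rgeo_le; lra. }
      lra.
    + rewrite Cn_mul, Cn_pow; auto.
Qed.

Lemma qp_tail_lb w q : Cnorm q < 1 -> (forall n, qpoch w q n <> Czero) ->
  exists k, 0 < k /\ forall e p, k <= Cnorm (qpoch (Cmul w (Cpow q e)) q p).
Proof.
  intros hq H. destruct (qp_lb w q hq H) as [k [Hk Hn]].
  exists (k / Ub w q). split. apply Rdiv_lt_0_compat; auto. apply Ub_pos.
  intros e p. pose proof (Hn (e + p)%nat) as Hep. rewrite qp_add, Cn_mul in Hep.
  pose proof (qp_ub w q e hq). pose proof (Ub_pos w q).
  pose proof (Cn_ge0 (qpoch w q e)). pose proof (Cn_ge0 (qpoch (Cmul w (Cpow q e)) q p)).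
  apply Rmult_le_reg_r with (Ub w q); auto. unfold Rdiv. rewrite Rmult_assoc, Rinv_l by lra.
  rewrite Rmult_1_r. nra.
Qed.

Definition Cconv (s : nat -> CC) (l : CC) : Prop :=
  forall eps : R, eps > 0 -> exists N : nat, forall n : nat,
    (n >= N)%nat -> Cnorm (Csub (s n) l) < eps.

Lemma Cconv_unique s l1 l2 : Cconv s l1 -> Cconv s l2 -> l1 = l2.
Proof.
  intros H1 H2.
  assert (Hz : Cnorm (Csub l1 l2) = 0).
  { destruct (Cn_ge0 (Csub l1 l2)) as [Hp|]; auto. exfalso.
    set (e := Cnorm (Csub l1 l2) / 2).
    destruct (H1 e ltac:(unfold e; lra)) as [N1 HN1].
    destruct (H2 e ltac:(unfold e; lra)) as [N2 HN2].
    specialize (HN1 (N1 + N2)%nat ltac:(lia)). specialize (HN2 (N1 + N2)%nat ltac:(lia)).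
    assert (E : Csub l1 l2 = Cadd (Copp (Csub (s (N1+N2)%nat) l1)) (Csub (s (N1+N2)%nat) l2)) by field.
    pose proof (Cn_add (Copp (Csub (s (N1+N2)%nat) l1)) (Csub (s (N1+N2)%nat) l2)).
    rewrite <- E, Cn_opp in H. unfold e in *. lra. }
  apply Cn_eq0 in Hz. replace l1 with (Cadd (Csub l1 l2) l2) by field. rewrite Hz. field.
Qed.

Lemma Cconv_bound s l (r : nat -> R) :
  (forall n, Cnorm (Csub (s n) l) <= r n) ->
  (forall eps, eps > 0 -> exists N, forall n, (n >= N)%nat -> r n < eps) ->
  Cconv s l.
Proof.
  intros Hb Hr eps He. destruct (Hr eps He) as [N HN]. exists N. intros n Hn.
  eapply Rle_lt_trans. apply Hb. auto.
Qed.

Lemma geo_to0 B rho : 0 <= rho < 1 ->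
  forall eps, eps > 0 -> exists N, forall n, (n >= N)%nat -> B * rho ^ n < eps.
Proof.
  intros Hr eps He. destruct (Rle_lt_dec B 0) as [HB|HB].
  - exists 0%nat. intros n _. pose proof (pow_le rho n ltac:(lra)). nra.
  - destruct (pow_lt_1_zero rho ltac:(rewrite Rabs_pos_eq; lra) (eps / B)) as [N HN].
    apply Rdiv_lt_0_compat; lra.
    exists N. intros n Hn. specialize (HN n Hn). rewrite Rabs_pos_eq in HN by (apply pow_le; lra).
    apply Rmult_lt_compat_l with (r := B) in HN; auto.
    replace (B * (eps / B)) with eps in HN by (field; lra). auto.
Qed.

Lemma Cconv_ext s t l : (forall n, s n = t n) -> Cconv s l -> Cconv t l.
Proof. intros E H eps He. destruct (H eps He) as [N HN]. exists N. intros n Hn. rewrite <- E. auto. Qed.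

Lemma Cconv_ev s t l N0 : (forall n, (n >= N0)%nat -> s n = t n) -> Cconv s l -> Cconv t l.
Proof.
  intros E H eps He. destruct (H eps He) as [N HN]. exists (N + N0)%nat. intros n Hn.
  rewrite <- E by lia. apply HN. lia.
Qed.

Lemma Cconv_add s t l m : Cconv s l -> Cconv t m -> Cconv (fun n => Cadd (s n) (t n)) (Cadd l m).
Proof.
  intros H1 H2 eps He. destruct (H1 (eps/2) ltac:(lra)) as [N1 HN1].
  destruct (H2 (eps/2) ltac:(lra)) as [N2 HN2]. exists (N1 + N2)%nat. intros n Hn.
  replace (Csub (Cadd (s n) (t n)) (Cadd l m)) with (Cadd (Csub (s n) l) (Csub (t n) m)) by field.
  eapply Rle_lt_trans. apply Cn_add. specialize (HN1 n ltac:(lia)). specialize (HN2 n ltac:(lia)). lra.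
Qed.

Lemma Cconv_scal s l c : Cconv s l -> Cconv (fun n => Cmul c (s n)) (Cmul c l).
Proof.
  intros H eps He. destruct (H (eps / (Cnorm c + 1))) as [N HN].
  { pose proof (Cn_ge0 c). apply Rlt_gt, Rdiv_lt_0_compat; lra. }
  exists N. intros n Hn. specialize (HN n Hn).
  replace (Csub (Cmul c (s n)) (Cmul c l)) with (Cmul c (Csub (s n) l)) by field.
  rewrite Cn_mul. pose proof (Cn_ge0 c). pose proof (Cn_ge0 (Csub (s n) l)).
  apply Rle_lt_trans with ((Cnorm c + 1) * Cnorm (Csub (s n) l)). apply Rmult_le_compat_r; lra.
  apply Rmult_lt_compat_l with (r := Cnorm c + 1) in HN; [|lra].
  replace ((Cnorm c + 1) * (eps / (Cnorm c + 1))) with eps in HN by (field; lra). auto.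
Qed.

Lemma Cconv_opp s l : Cconv s l -> Cconv (fun n => Copp (s n)) (Copp l).
Proof.
  intro H. apply (Cconv_ext (fun n => Cmul (Copp Cone) (s n))). intro; field.
  replace (Copp l) with (Cmul (Copp Cone) l) by field. apply Cconv_scal; auto.
Qed.

Lemma Cconv_sub s t l m : Cconv s l -> Cconv t m -> Cconv (fun n => Csub (s n) (t n)) (Csub l m).
Proof. intros. apply Cconv_add; auto. apply Cconv_opp; auto. Qed.

Lemma Cconv_const c : Cconv (fun _ => c) c.
Proof. intros eps He. exists 0%nat. intros. replace (Csub c c) with Czero by field. rewrite Cn_zero. lra. Qed.

Lemma Cpartial_ext f g n : (forall i, (i < n)%nat -> f i = g i) -> Cpartial f n = Cpartial g n.
Proof.
  induction n as [|n IH]; intro H; simpl. reflexivity.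
  rewrite IH; [rewrite H by lia; reflexivity|intros; apply H; lia].
Qed.

Lemma Cpartial_0 f : Cpartial f 0 = Czero.
Proof. reflexivity. Qed.
Lemma Cpartial_S f n : Cpartial f (S n) = Cadd (Cpartial f n) (f n).
Proof. reflexivity. Qed.

Definition tt (A0 b c y q D : CC) (m : nat) : CC :=
  Cmul (Cmul (Csub Cone (Cmul (Cmul (Cmul A0 D) (Cpow q m)) (Cpow q m)))
    (Cdiv (Cmul (Cmul (Cmul (qpoch (Cmul A0 D) q m) (qpoch b q m)) (qpoch c q m)) (qpoch D q m))
          (Cmul (Cmul (Cmul (qpoch q q m) (qpoch (Cmul (Cmul c y) D) q m))
                      (qpoch (Cmul (Cmul b y) D) q m)) (qpoch (Cmul (Cmul b c) y) q m))))
  (Cpow y m).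

Definition GG (A0 b c y q D : CC) (m : nat) : CC :=
  match m with O => Czero | S m1 =>
   Cdiv (Cmul (Cmul (Cmul (Cmul (Cmul D (qpoch (Cmul A0 D) q m)) (qpoch b q m)) (qpoch c q m))
                    (qpoch (Cmul D q) q m1)) (Cpow y m))
        (Cmul (Cmul (Cmul (qpoch q q m1) (qpoch (Cmul (Cmul (Cmul c y) D) q) q m1))
                    (qpoch (Cmul (Cmul (Cmul b y) D) q) q m1)) (qpoch (Cmul (Cmul b c) y) q m1))
  end.

Lemma Cpow_S z n : Cpow z (S n) = Cmul (Cpow z n) z.
Proof. reflexivity. Qed.

Lemma tt_rel (A0 b c y q D : CC) (m : nat)
  (hq0 : q <> Czero)
  (hA : Cmul A0 q = Cmul (Cmul b c) y)
  (Hq : forall n, qpoch q q n <> Czero)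
  (Hcy : forall n, qpoch (Cmul (Cmul c y) D) q n <> Czero)
  (Hby : forall n, qpoch (Cmul (Cmul b y) D) q n <> Czero)
  (Hbcy : forall n, qpoch (Cmul (Cmul b c) y) q n <> Czero) :
  Cmul (Cmul (Csub Cone (Cmul A0 D)) (Csub Cone (Cmul y D))) (tt A0 b c y q (Cmul D q) m)
  = Csub (Cadd (Cmul (Cmul (Csub Cone (Cmul (Cmul c y) D)) (Csub Cone (Cmul (Cmul b y) D)))
                     (tt A0 b c y q D m)) (GG A0 b c y q D m)) (GG A0 b c y q D (S m)).
Proof.
  assert (HA0 : A0 = Cdiv (Cmul (Cmul b c) y) q) by (rewrite <- hA; field; auto).
  destruct m as [|m1].
  - unfold tt, GG. simpl. rewrite HA0. field.
    repeat split; try apply Cone_neq0; auto.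
  - unfold tt, GG. cbv beta iota.
    rewrite (qp_S (Cmul A0 D) q (S m1)), (qp_S b q (S m1)), (qp_S c q (S m1)).
    rewrite (qp_S (Cmul D q) q m1), (qp_S q q m1), (qp_S (Cmul (Cmul (Cmul c y) D) q) q m1),
      (qp_S (Cmul (Cmul (Cmul b y) D) q) q m1), (qp_S (Cmul (Cmul b c) y) q m1).
    rewrite !(qp_front (Cmul A0 D) q m1), !(qp_front D q m1),
      !(qp_front (Cmul (Cmul c y) D) q m1), !(qp_front (Cmul (Cmul b y) D) q m1).
    rewrite ?(qp_S b q m1), ?(qp_S c q m1), ?(qp_S q q m1), ?(qp_S (Cmul (Cmul b c) y) q m1).
    rewrite (qp_S (Cmul A0 (Cmul D q)) q m1), (qp_S (Cmul (Cmul c y) (Cmul D q)) q m1),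
      (qp_S (Cmul (Cmul b y) (Cmul D q)) q m1).
    rewrite (qp_arg (Cmul A0 (Cmul D q)) (Cmul (Cmul A0 D) q)) by field.
    rewrite (qp_arg (Cmul (Cmul c y) (Cmul D q)) (Cmul (Cmul (Cmul c y) D) q)) by field.
    rewrite (qp_arg (Cmul (Cmul b y) (Cmul D q)) (Cmul (Cmul (Cmul b y) D) q)) by field.
    rewrite !Cpow_S.
    set (Xa := qpoch (Cmul (Cmul A0 D) q) q m1).
    set (Xb := qpoch b q m1). set (Xc := qpoch c q m1).
    set (Xd := qpoch (Cmul D q) q m1). set (Xq := qpoch q q m1).
    set (Xcy := qpoch (Cmul (Cmul (Cmul c y) D) q) q m1).
    set (Xby := qpoch (Cmul (Cmul (Cmul b y) D) q) q m1).
    set (Xbcy := qpoch (Cmul (Cmul b c) y) q m1).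
    set (v := Cpow q m1). set (w := Cpow y m1).
    assert (N1 : Xq <> Czero) by apply Hq.
    assert (N2 : Xbcy <> Czero) by apply Hbcy.
    assert (N3 : Xcy <> Czero).
    { intro E. apply (Hcy (S m1)). rewrite qp_front. fold Xcy. rewrite E. field. }
    assert (N4 : Xby <> Czero).
    { intro E. apply (Hby (S m1)). rewrite qp_front. fold Xby. rewrite E. field. }
    assert (N5 : Csub Cone (Cmul (Cmul c y) D) <> Czero).
    { intro E. apply (Hcy 1%nat). simpl. rewrite <- E. field. }
    assert (N6 : Csub Cone (Cmul (Cmul b y) D) <> Czero).
    { intro E. apply (Hby 1%nat). simpl. rewrite <- E. field. }
    assert (N7 : Csub Cone (Cmul q v) <> Czero).
    { intro E. apply (Hq (S m1)). rewrite qp_S. fold Xq v. rewrite E. field. }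
    assert (N8 : Csub Cone (Cmul (Cmul (Cmul (Cmul c y) D) q) v) <> Czero).
    { intro E. apply (Hcy (S (S m1))). rewrite qp_S, qp_front. fold Xcy. rewrite Cpow_S. fold v.
      replace (Csub Cone (Cmul (Cmul (Cmul c y) D) (Cmul v q))) with
        (Csub Cone (Cmul (Cmul (Cmul (Cmul c y) D) q) v)) by field. rewrite E. field. }
    assert (N9 : Csub Cone (Cmul (Cmul (Cmul (Cmul b y) D) q) v) <> Czero).
    { intro E. apply (Hby (S (S m1))). rewrite qp_S, qp_front. fold Xby. rewrite Cpow_S. fold v.
      replace (Csub Cone (Cmul (Cmul (Cmul b y) D) (Cmul v q))) with
        (Csub Cone (Cmul (Cmul (Cmul (Cmul b y) D) q) v)) by field. rewrite E. field. }
    assert (N10 : Csub Cone (Cmul (Cmul (Cmul b c) y) v) <> Czero).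
    { intro E. apply (Hbcy (S m1)). rewrite qp_S. fold Xbcy v. rewrite E. field. }
    clearbody Xa Xb Xc Xd Xq Xcy Xby Xbcy v w.
    rewrite HA0. field. repeat split; auto.
Qed.

Lemma qp_nz_small w q : Cnorm q < 1 -> Cnorm w < 1 -> forall n, qpoch w q n <> Czero.
Proof.
  intros hq hw n. apply qp_nz_of. intros l E.
  pose proof (Cn_sub_ge Cone (Cmul w (Cpow q l))). rewrite E, Cn_zero, Cn_one, Cn_mul, Cn_pow in H.
  pose proof (Cn_ge0 q). pose proof (Cn_ge0 w).
  assert (Cnorm q ^ l <= 1 ^ l) by (apply pow_incr; lra). rewrite pow1 in H2. nra.
Qed.

Lemma prod_le a b c d : 0 <= a <= b -> 0 <= c <= d -> a * c <= b * d.
Proof. intros. apply Rmult_le_compat; lra. Qed.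
Lemma div_le n N d d0 : 0 <= n <= N -> 0 < d0 <= d -> n / d <= N / d0.
Proof.
  intros. unfold Rdiv. apply Rmult_le_compat; try lra.
  left; apply Rinv_0_lt_compat; lra. apply Rinv_le_contravar; lra.
Qed.

Lemma prod6_le a1 a2 a3 a4 a5 a6 b1 b2 b3 b4 b5 b6 :
  0 <= a1 <= b1 -> 0 <= a2 <= b2 -> 0 <= a3 <= b3 -> 0 <= a4 <= b4 -> 0 <= a5 <= b5 -> 0 <= a6 <= b6 ->
  a1 * a2 * a3 * a4 * a5 * a6 <= b1 * b2 * b3 * b4 * b5 * b6.
Proof.
  intros.
  assert (0 <= a1*a2 <= b1*b2) by (split; [apply Rmult_le_pos; lra| apply prod_le; auto]).
  assert (0 <= a1*a2*a3 <= b1*b2*b3) by (split; [apply Rmult_le_pos; lra| apply prod_le; auto]).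
  assert (0 <= a1*a2*a3*a4 <= b1*b2*b3*b4) by (split; [apply Rmult_le_pos; lra| apply prod_le; auto]).
  assert (0 <= a1*a2*a3*a4*a5 <= b1*b2*b3*b4*b5) by (split; [apply Rmult_le_pos; lra| apply prod_le; auto]).
  apply prod_le; auto.
Qed.
Lemma prod4_le a1 a2 a3 a4 b1 b2 b3 b4 :
  0 <= a1 <= b1 -> 0 <= a2 <= b2 -> 0 <= a3 <= b3 -> 0 <= a4 <= b4 ->
  a1 * a2 * a3 * a4 <= b1 * b2 * b3 * b4.
Proof.
  intros.
  assert (0 <= a1*a2 <= b1*b2) by (split; [apply Rmult_le_pos; lra| apply prod_le; auto]).
  assert (0 <= a1*a2*a3 <= b1*b2*b3) by (split; [apply Rmult_le_pos; lra| apply prod_le; auto]).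
  apply prod_le; auto.
Qed.

Lemma tele_sum (A0 b c y q D : CC)
  (hq0 : q <> Czero)
  (hA : Cmul A0 q = Cmul (Cmul b c) y)
  (Hq : forall n, qpoch q q n <> Czero)
  (Hcy : forall n, qpoch (Cmul (Cmul c y) D) q n <> Czero)
  (Hby : forall n, qpoch (Cmul (Cmul b y) D) q n <> Czero)
  (Hbcy : forall n, qpoch (Cmul (Cmul b c) y) q n <> Czero) M :
  Cmul (Cmul (Csub Cone (Cmul A0 D)) (Csub Cone (Cmul y D))) (Cpartial (tt A0 b c y q (Cmul D q)) M)
  = Csub (Cmul (Cmul (Csub Cone (Cmul (Cmul c y) D)) (Csub Cone (Cmul (Cmul b y) D)))
               (Cpartial (tt A0 b c y q D) M)) (GG A0 b c y q D M).
Proof.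
  induction M as [|M IH].
  - rewrite !Cpartial_0. unfold GG. field.
  - rewrite !Cpartial_S. transitivity (Cadd (Cmul (Cmul (Csub Cone (Cmul A0 D)) (Csub Cone (Cmul y D))) (Cpartial (tt A0 b c y q (Cmul D q)) M))
       (Cmul (Cmul (Csub Cone (Cmul A0 D)) (Csub Cone (Cmul y D))) (tt A0 b c y q (Cmul D q) M))).
    field. rewrite IH, tt_rel; auto. field.
Qed.

Definition ZZ (A0 b c y q : CC) (i : nat) : CC :=
  Cmul (Csub Cone (Cmul A0 (Cpow q i)))
    (Cdiv (Cmul (qpoch (Cmul c y) q i) (qpoch (Cmul b y) q i))
          (Cmul (qpoch (Cmul (Cmul b c) y) q i) (qpoch y q i))).

Lemma GG_bound (A0 b c y q : CC) i
  (hq : Cnorm q < 1)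
  (Hcy : forall n, qpoch (Cmul c y) q n <> Czero)
  (Hby : forall n, qpoch (Cmul b y) q n <> Czero)
  (Hbcy : forall n, qpoch (Cmul (Cmul b c) y) q n <> Czero) :
  exists B, forall M, Cnorm (GG A0 b c y q (Cpow q i) M) <= B * Cnorm y ^ M.
Proof.
  pose proof (Cn_ge0 q) as Hq0.
  assert (Hqn : forall n, qpoch q q n <> Czero) by (apply qp_nz_small; auto).
  destruct (qp_lb q q hq Hqn) as [k1 [Hk1 Hb1]].
  destruct (qp_tail_lb _ q hq Hcy) as [k2 [Hk2 Hb2]].
  destruct (qp_tail_lb _ q hq Hby) as [k3 [Hk3 Hb3]].
  destruct (qp_lb _ q hq Hbcy) as [k4 [Hk4 Hb4]].
  exists (Ub A0 q * Ub b q * Ub c q * Ub Cone q / (k1 * k2 * k3 * k4)).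
  intros [|m].
  - cbn [GG]. rewrite Cn_zero. pose proof (Ub_pos A0 q). pose proof (Ub_pos b q).
    pose proof (Ub_pos c q). pose proof (Ub_pos Cone q).
    apply Rmult_le_pos. apply Rlt_le, Rdiv_lt_0_compat. repeat apply Rmult_lt_0_compat; auto.
    repeat apply Rmult_lt_0_compat; auto. apply pow_le, Cn_ge0.
  - cbn [GG].
    rewrite (qp_arg (Cmul (Cmul (Cmul c y) (Cpow q i)) q) (Cmul (Cmul c y) (Cpow q (S i)))) by (simpl; field).
    rewrite (qp_arg (Cmul (Cmul (Cmul b y) (Cpow q i)) q) (Cmul (Cmul b y) (Cpow q (S i)))) by (simpl; field).
    assert (Hden : Cmul (Cmul (Cmul (qpoch q q m) (qpoch (Cmul (Cmul c y) (Cpow q (S i))) q m))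
        (qpoch (Cmul (Cmul b y) (Cpow q (S i))) q m)) (qpoch (Cmul (Cmul b c) y) q m) <> Czero).
    { repeat apply Cmul_nz; auto; apply qp_tail_nz; auto. }
    rewrite Cn_div by auto. rewrite !Cn_mul.
    replace (Ub A0 q * Ub b q * Ub c q * Ub Cone q / (k1 * k2 * k3 * k4) * Cnorm y ^ S m)
      with (1 * Ub A0 q * Ub b q * Ub c q * Ub Cone q * Cnorm y ^ S m / (k1 * k2 * k3 * k4))
      by (field; repeat split; lra).
    assert (Hqi : Cnorm q ^ i <= 1) by (assert (Cnorm q ^ i <= 1 ^ i) by (apply pow_incr; lra); rewrite pow1 in *; auto).
    apply div_le.
    + split. repeat apply Rmult_le_pos; apply Cn_ge0.
      apply prod6_le.
      * rewrite Cn_pow. split; auto. apply pow_le; auto.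
      * split. apply Cn_ge0. apply qp_tail_ub; auto.
      * split. apply Cn_ge0. apply qp_ub; auto.
      * split. apply Cn_ge0. apply qp_ub; auto.
      * split. apply Cn_ge0. apply qp_ub_le; auto. rewrite Cn_mul, Cn_one, Cn_pow.
        pose proof (pow_le (Cnorm q) i Hq0). nra.
      * rewrite Cn_pow. split. apply pow_le, Cn_ge0. lra.
    + split. repeat apply Rmult_lt_0_compat; auto.
      apply prod4_le; split; try lra; auto.
Qed.

Lemma sum6 (A0 b c y q : CC)
  (hq : Cnorm q < 1) (hq0 : q <> Czero) (hy : Cnorm y < 1)
  (hA : Cmul A0 q = Cmul (Cmul b c) y)
  (HA : forall i, Csub Cone (Cmul A0 (Cpow q i)) <> Czero)
  (Hcy : forall n, qpoch (Cmul c y) q n <> Czero)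
  (Hby : forall n, qpoch (Cmul b y) q n <> Czero)
  (Hbcy : forall n, qpoch (Cmul (Cmul b c) y) q n <> Czero) :
  forall i, Cconv (Cpartial (tt A0 b c y q (Cpow q i))) (ZZ A0 b c y q i).
Proof.
  assert (Hqn : forall n, qpoch q q n <> Czero) by (apply qp_nz_small; auto).
  assert (Hyn : forall n, qpoch y q n <> Czero) by (apply qp_nz_small; auto).
  assert (HA0 : A0 = Cdiv (Cmul (Cmul b c) y) q) by (rewrite <- hA; field; auto).
  induction i as [|i IH].
  - apply (Cconv_ev (fun _ => ZZ A0 b c y q 0) _ _ 1%nat).
    + intros n Hn. destruct n as [|n]. lia. clear Hn. symmetry.
      induction n as [|n IHn].
      * rewrite Cpartial_S, Cpartial_0. unfold tt, ZZ. simpl Cpow. simpl qpoch. field.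
        repeat split; apply Cone_neq0.
      * rewrite Cpartial_S, IHn. unfold tt.
        replace (qpoch (Cpow q 0) q (S n)) with Czero.
        field. repeat split; try apply Hqn; try apply Hbcy; try apply qp_tail_nz; auto.
        rewrite qp_front. simpl Cpow. field.
    + apply Cconv_const.
  - set (D := Cpow q i).
    set (E := Cmul (Csub Cone (Cmul A0 D)) (Csub Cone (Cmul y D))).
    set (K := Cmul (Csub Cone (Cmul (Cmul c y) D)) (Csub Cone (Cmul (Cmul b y) D))).
    assert (HE : E <> Czero).
    { apply Cmul_nz. apply HA. intro Ey. apply (Hyn (S i)). rewrite qp_S. fold D. rewrite Ey. field. }
    assert (Hcy' : forall n, qpoch (Cmul (Cmul c y) D) q n <> Czero) by (apply qp_tail_nz; auto).
    assert (Hby' : forall n, qpoch (Cmul (Cmul b y) D) q n <> Czero) by (apply qp_tail_nz; auto).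
    assert (Hrel : forall M, Cpartial (tt A0 b c y q (Cpow q (S i))) M =
       Cmul (Cdiv Cone E) (Csub (Cmul K (Cpartial (tt A0 b c y q D) M)) (GG A0 b c y q D M))).
    { intro M. pose proof (tele_sum A0 b c y q D hq0 hA Hqn Hcy' Hby' Hbcy M) as T. fold E K in T.
      change (Cpow q (S i)) with (Cmul D q). rewrite <- T. field. auto. }
    assert (HG : Cconv (GG A0 b c y q D) Czero).
    { destruct (GG_bound A0 b c y q i hq Hcy Hby Hbcy) as [B HB].
      apply Cconv_bound with (r := fun M => B * Cnorm y ^ M).
      intro n. replace (Csub (GG A0 b c y q D n) Czero) with (GG A0 b c y q D n) by field. apply HB.
      apply geo_to0. split. apply Cn_ge0. auto. }
    replace (ZZ A0 b c y q (S i)) with (Cmul (Cdiv Cone E) (Csub (Cmul K (ZZ A0 b c y q i)) Czero)).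
    + apply (Cconv_ext (fun M => Cmul (Cdiv Cone E) (Csub (Cmul K (Cpartial (tt A0 b c y q D) M)) (GG A0 b c y q D M)))).
      intro M. symmetry. apply Hrel.
      apply Cconv_scal. apply Cconv_sub; auto. apply Cconv_scal; auto.
    + unfold ZZ, E, K. rewrite !qp_S. fold D. change (Cpow q (S i)) with (Cmul D q).
      rewrite HA0. field. repeat split; auto; change (R1, R0) with Cone.
      * intro Ey. apply (Hyn (S i)). rewrite qp_S. fold D. rewrite Ey. field.
      * intro Ey. apply (Hbcy (S i)). rewrite qp_S. fold D. rewrite Ey. field.
      * intro Ey. apply (HA i). fold D. rewrite HA0.
        transitivity (Cdiv (Csub q (Cmul (Cmul (Cmul b c) y) D)) q). field. auto.
        rewrite Ey. field. auto.
Qed.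

Fixpoint rpar (e : nat -> R) (n : nat) : R := match n with O => 0 | S m => rpar e m + e m end.

Lemma rpar_split e J K : rpar e (J + K) = rpar e J + rpar (fun p => e (J + p)%nat) K.
Proof. induction K as [|K IH]; simpl. rewrite Nat.add_0_r. ring. rewrite Nat.add_succ_r. simpl. rewrite IH. ring. Qed.

Lemma rpar_le e f n : (forall i, (i < n)%nat -> e i <= f i) -> rpar e n <= rpar f n.
Proof. induction n as [|n IH]; intro H; simpl. lra. assert (e n <= f n) by (apply H; lia).
  assert (rpar e n <= rpar f n) by (apply IH; intros; apply H; lia). lra. Qed.

Lemma rpar_ge0 e n : (forall i, 0 <= e i) -> 0 <= rpar e n.
Proof. intro H. induction n; simpl. lra. pose proof (H n). lra. Qed.

Lemma rpar_scal c e n : rpar (fun i => c * e i) n = c * rpar e n.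
Proof. induction n; simpl. ring. rewrite IHn. ring. Qed.

Lemma rpar_sum_f e n : sum_f_R0 e n = rpar e (S n).
Proof. induction n; simpl. ring. rewrite IHn. simpl. ring. Qed.

Lemma rpar_mono e n m : (forall i, 0 <= e i) -> (n <= m)%nat -> rpar e n <= rpar e m.
Proof.
  intros H Hle. replace m with (n + (m - n))%nat by lia. rewrite rpar_split.
  pose proof (rpar_ge0 (fun p => e (n + p)%nat) (m - n) (fun p => H _)). lra.
Qed.

Lemma rpar_geo B r M K : rpar (fun p => B * r ^ (M + p)) K = B * r ^ M * rgeo r K.
Proof. induction K; simpl. ring. rewrite IHK, pow_add. ring. Qed.

Lemma conv_to0 (e : nat -> R) E rho :
  (forall i, 0 <= e i) -> infinite_sum e E -> 0 <= rho < 1 ->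
  forall eps, eps > 0 -> exists N, forall n, (n >= N)%nat ->
    rpar (fun j => e j * rho ^ (n - j)) n < eps.
Proof.
  intros He HE Hr eps Heps.
  destruct (HE (eps / 4) ltac:(lra)) as [N0 HN0].
  set (J := S N0).
  assert (HJ : forall n, (n >= J)%nat -> Rabs (rpar e n - E) < eps / 4).
  { intros n Hn. destruct n as [|n]. unfold J in Hn; lia.
    specialize (HN0 n ltac:(unfold J in Hn; lia)). unfold R_dist in HN0. rewrite rpar_sum_f in HN0. auto. }
  destruct (geo_to0 (rpar e J) rho Hr (eps / 2) ltac:(lra)) as [N1 HN1].
  exists (J + N1)%nat. intros n Hn.
  replace n with (J + (n - J))%nat by lia. set (K := (n - J)%nat).
  rewrite rpar_split.
  assert (H1 : rpar (fun j => e j * rho ^ (J + K - j)) J <= rpar e J * rho ^ K).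
  { rewrite Rmult_comm, <- rpar_scal. apply rpar_le. intros i Hi.
    replace (J + K - i)%nat with (K + (J - i))%nat by lia. rewrite pow_add.
    pose proof (He i) as a1. pose proof (pow_le rho K ltac:(lra)) as a2.
    assert (a3 : rho ^ (J - i) <= 1 ^ (J - i)) by (apply pow_incr; lra). rewrite pow1 in a3.
    assert (a4 : 0 <= rho ^ (J - i)) by (apply pow_le; lra).
    assert (rho ^ K * rho ^ (J - i) <= rho ^ K) by nra. nra. }
  assert (H2 : rpar (fun p => e (J + p)%nat * rho ^ (J + K - (J + p))) K <= rpar (fun p => e (J + p)%nat) K).
  { apply rpar_le. intros i Hi. pose proof (He (J + i)%nat) as a1.
    assert (a2 : rho ^ (J + K - (J + i)) <= 1 ^ (J + K - (J + i))) by (apply pow_incr; lra). rewrite pow1 in a2.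
    assert (a3 : 0 <= rho ^ (J + K - (J + i))) by (apply pow_le; lra). nra. }
  assert (H3 : rpar (fun p => e (J + p)%nat) K < eps / 2).
  { pose proof (rpar_split e J K) as a1. pose proof (HJ J (le_n J)) as a2. pose proof (HJ (J + K)%nat ltac:(lia)) as a3.
    apply Rabs_def2 in a2. apply Rabs_def2 in a3. lra. }
  assert (H4 : rpar e J * rho ^ K < eps / 2) by (apply HN1; unfold K; lia).
  lra.
Qed.

Lemma Cpartial_front g n : Cpartial g (S n) = Cadd (g 0%nat) (Cpartial (fun i => g (S i)) n).
Proof. induction n as [|n IH]. rewrite !Cpartial_S, !Cpartial_0. field.
  rewrite Cpartial_S, IH, Cpartial_S. field. Qed.

Lemma Cpartial_add f g n : Cpartial (fun i => Cadd (f i) (g i)) n = Cadd (Cpartial f n) (Cpartial g n).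
Proof. induction n as [|n IH]. rewrite !Cpartial_0. field. rewrite !Cpartial_S, IH. field. Qed.

Lemma Cpartial_sub f g n : Cpartial (fun i => Csub (f i) (g i)) n = Csub (Cpartial f n) (Cpartial g n).
Proof. induction n as [|n IH]. rewrite !Cpartial_0. field. rewrite !Cpartial_S, IH. field. Qed.

Lemma Cpartial_scal c f n : Cpartial (fun i => Cmul c (f i)) n = Cmul c (Cpartial f n).
Proof. induction n as [|n IH]. rewrite !Cpartial_0. field. rewrite !Cpartial_S, IH. field. Qed.

Lemma Cpartial_split f J K : Cpartial f (J + K) = Cadd (Cpartial f J) (Cpartial (fun p => f (J + p)%nat) K).
Proof. induction K as [|K IH]. rewrite Nat.add_0_r, Cpartial_0. field.
  rewrite Nat.add_succ_r, !Cpartial_S, IH. field. Qed.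

Lemma Cpartial_norm f n : Cnorm (Cpartial f n) <= rpar (fun i => Cnorm (f i)) n.
Proof. induction n as [|n IH]. rewrite Cpartial_0, Cn_zero. simpl. lra.
  rewrite Cpartial_S. simpl. eapply Rle_trans. apply Cn_add. lra. Qed.

Lemma Cpartial_swap (h : nat -> nat -> CC) N :
  Cpartial (fun m => Cpartial (fun j => h m j) (S m)) N
  = Cpartial (fun j => Cpartial (fun p => h (j + p)%nat j) (N - j)) N.
Proof.
  induction N as [|N IH].
  - reflexivity.
  - rewrite (Cpartial_S (fun m => Cpartial (fun j => h m j) (S m))), IH.
    rewrite (Cpartial_S (fun j => Cpartial (fun p => h (j + p)%nat j) (S N - j))).
    replace (S N - N)%nat with 1%nat by lia.
    assert (L1 : Cpartial (fun p => h (N + p)%nat N) 1 = h N N).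
    { rewrite Cpartial_S, Cpartial_0, Nat.add_0_r. field. }
    rewrite L1.
    assert (E : Cpartial (fun j => Cpartial (fun p => h (j + p)%nat j) (S N - j)) N
      = Cadd (Cpartial (fun j => Cpartial (fun p => h (j + p)%nat j) (N - j)) N)
             (Cpartial (fun j => h N j) N)).
    { rewrite <- Cpartial_add. apply Cpartial_ext. intros i Hi.
      replace (S N - i)%nat with (S (N - i)) by lia. rewrite Cpartial_S.
      replace (i + (N - i))%nat with N by lia. reflexivity. }
    rewrite E, (Cpartial_S (fun j => h N j)). field.
Qed.

Lemma Rle_eps a b : (forall eps, eps > 0 -> a <= b + eps) -> a <= b.
Proof.
  intro H. destruct (Rle_lt_dec a b) as [|Hlt]; auto.
  specialize (H ((a - b) / 2) ltac:(lra)). lra.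
Qed.

Lemma tail_bound g L B rho :
  Cconv (Cpartial g) L -> 0 <= rho < 1 -> (forall p, Cnorm (g p) <= B * rho ^ p) ->
  forall M, Cnorm (Csub (Cpartial g M) L) <= B * rho ^ M / (1 - rho).
Proof.
  intros HL Hr Hg M. apply Rle_eps. intros eps He.
  destruct (HL eps He) as [N HN]. specialize (HN (M + N)%nat ltac:(lia)).
  rewrite Cpartial_split in HN.
  replace (Csub (Cpartial g M) L) with
    (Csub (Csub (Cadd (Cpartial g M) (Cpartial (fun p => g (M + p)%nat) N)) L)
          (Cpartial (fun p => g (M + p)%nat) N)) by field.
  eapply Rle_trans. apply Cn_sub.
  assert (Hb : Cnorm (Cpartial (fun p => g (M + p)%nat) N) <= B * rho ^ M / (1 - rho)).
  { eapply Rle_trans. apply Cpartial_norm.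
    eapply Rle_trans. apply (rpar_le _ (fun p => B * rho ^ (M + p))). intros; apply Hg.
    rewrite rpar_geo. unfold Rdiv.
    assert (HB : 0 <= B * rho ^ M).
    { pose proof (Hg M). pose proof (Cn_ge0 (g M)). destruct (Req_dec (rho ^ M) 0) as [Z|Z].
      rewrite Z; lra. lra. }
    apply Rmult_le_compat_l; auto. apply rgeo_le; auto. }
  lra.
Qed.

Definition cf1 (a k q z s : CC) (m : nat) : CC := let x := Cdiv (Cmul q a) z in let n := S m in
  Cmul (Cdiv (Cmul (Cmul (Cmul (qpoch (Cmul q s) q n) (qpoch (Copp (Cmul q s)) q n))
                                   (qpoch z q n)) (qpoch q q m))
                     (Cmul (Cmul (Cmul (qpoch s q n) (qpoch (Copp s) q n))
                                 (qpoch (Cmul q k) q n)) (qpoch (Cdiv (Cmul q k) z) q n)))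
               (Cpow x n).

Definition cf2 (a q z : CC) (m : nat) : CC := let x := Cdiv (Cmul q a) z in let n := S m in
  Cmul (Cdiv (Cmul (qpoch z q n) (qpoch q q m))
                     (Cmul (qpoch (Cmul q a) q n) (qpoch (Cdiv (Cmul q a) z) q n)))
               (Cpow x n).

Definition f3d (a k q z s : CC) (m : nat) : CC := let x := Cdiv (Cmul q a) z in let n := S m in
    Cmul (Cdiv (Cmul (Cmul (Cmul (Cmul (qpoch (Cmul q s) q n) (qpoch (Copp (Cmul q s)) q n))
                                  (qpoch k q n)) (qpoch z q n)) (qpoch (Cdiv k a) q n))
               (Cmul (Cmul (Cmul (Cmul (Cmul (qpoch s q n) (qpoch (Copp s) q n))
                                       (qpoch (Cmul q k) q n)) (qpoch (Cdiv (Cmul q k) z) q n))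
                           (qpoch (Cmul q a) q n))
                     (Csub Cone (Cpow q n))))
         (Cpow x n).

Definition Mf (a k q : CC) (n j : nat) : CC :=
  Cdiv (Cmul (qpoch (Cdiv k a) q (n - j)) (qpoch k q (n + j)))
       (Cmul (qpoch q q (n - j)) (qpoch (Cmul a q) q (n + j))).

Record Hy (a k q z s : CC) : Prop := {
  h_q : Cnorm q < 1; h_q0 : q <> Czero; h_z0 : z <> Czero; h_a0 : a <> Czero;
  h_s : Cmul s s = k;
  h_x : Cnorm (Cdiv (Cmul q a) z) < 1;
  h_1 : forall n, qpoch s q n <> Czero;
  h_2 : forall n, qpoch (Copp s) q n <> Czero;
  h_3 : forall n, qpoch (Cmul q k) q n <> Czero;
  h_4 : forall n, qpoch (Cdiv (Cmul q k) z) q n <> Czero;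
  h_5 : forall n, qpoch (Cmul q a) q n <> Czero }.

Lemma Tn (s k q : CC) n : Cmul s s = k ->
  Cmul (Cmul (qpoch (Cmul q s) q n) (qpoch (Copp (Cmul q s)) q n)) (Csub Cone k)
  = Cmul (Cmul (qpoch s q n) (qpoch (Copp s) q n)) (Csub Cone (Cmul k (Cmul (Cpow q n) (Cpow q n)))).
Proof.
  intros <-. induction n as [|n IH].
  - simpl. field.
  - rewrite !qp_S. rewrite Cpow_S.
    transitivity (Cmul (Cmul (Cmul (qpoch (Cmul q s) q n) (qpoch (Copp (Cmul q s)) q n)) (Csub Cone (Cmul s s)))
      (Cmul (Csub Cone (Cmul (Cmul q s) (Cpow q n))) (Csub Cone (Cmul (Copp (Cmul q s)) (Cpow q n))))).
    field. rewrite IH. field.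
Qed.

Lemma one_minus_k a k q z s : Hy a k q z s -> Csub Cone k <> Czero.
Proof.
  intros H E. pose proof (h_1 _ _ _ _ _ H 1%nat) as H1. pose proof (h_2 _ _ _ _ _ H 1%nat) as H2.
  simpl in H1, H2. rewrite <- (h_s _ _ _ _ _ H) in E.
  assert (E' : Cmul (Cmul Cone (Csub Cone (Cmul s Cone))) (Cmul Cone (Csub Cone (Cmul (Copp s) Cone))) = Czero).
  { rewrite <- E. field. }
  apply (Cmul_nz _ _ H1 H2). exact E'.
Qed.

Lemma qp_qa a q n : qpoch (Cmul a q) q n = qpoch (Cmul q a) q n.
Proof. apply qp_arg. field. Qed.

Lemma qq_nz q : Cnorm q < 1 -> forall n, qpoch q q n <> Czero.
Proof. intro. apply qp_nz_small; auto. Qed.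

Lemma W0 a k q z s m : Hy a k q z s -> Cmul (cf1 a k q z s m) (Mf a k q (S m) 0) = f3d a k q z s m.
Proof.
  intro H. pose proof (qq_nz q (h_q _ _ _ _ _ H)) as Hq.
  unfold cf1, f3d, Mf. cbv zeta. rewrite Nat.sub_0_r, Nat.add_0_r, qp_qa.
  rewrite (qp_S q q m).
  assert (N1 : Csub Cone (Cmul q (Cpow q m)) <> Czero).
  { intro E. apply (Hq (S m)). rewrite qp_S, E. field. }
  assert (N2 : Csub Cone (Cmul (Cpow q m) q) <> Czero) by (rewrite <- Cpow_S; intro E; apply (Hq (S m)); rewrite qp_S; rewrite Cpow_S in *; replace (Cmul q (Cpow q m)) with (Cmul (Cpow q m) q) by field; rewrite E; field).
  destruct H. rewrite !Cpow_S. field. repeat split; auto; change (R1, R0) with Cone; auto.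
Qed.

Lemma Tn' (s k q : CC) n : Cmul s s = k -> Csub Cone k <> Czero ->
  Cmul (qpoch (Cmul q s) q n) (qpoch (Copp (Cmul q s)) q n)
  = Cdiv (Cmul (Cmul (qpoch s q n) (qpoch (Copp s) q n)) (Csub Cone (Cmul k (Cmul (Cpow q n) (Cpow q n))))) (Csub Cone k).
Proof. intros H1 H2. rewrite <- (Tn s k q n H1). field. auto. Qed.

Lemma Kk (k q : CC) n : Csub Cone (Cmul k (Cpow q n)) <> Czero ->
  qpoch k q n = Cdiv (Cmul (Csub Cone k) (qpoch (Cmul q k) q n)) (Csub Cone (Cmul k (Cpow q n))).
Proof.
  intro H. pose proof (qp_front k q n) as E1. rewrite qp_S in E1.
  rewrite (qp_arg (Cmul q k) (Cmul k q)) by field. rewrite <- E1. field. auto.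
Qed.

Lemma Weq a k q z s j' p : Hy a k q z s ->
  Cmul (cf1 a k q z s (j' + p)) (Mf a k q (S (j' + p)) (S j'))
  = Cmul (Cdiv (cf2 a q z j') (ZZ (Cmul k (Cpow q (S j'))) (Cdiv k a) (Cmul z (Cpow q (S j'))) (Cdiv (Cmul q a) z) q (S j')))
         (tt (Cmul k (Cpow q (S j'))) (Cdiv k a) (Cmul z (Cpow q (S j'))) (Cdiv (Cmul q a) z) q (Cpow q (S j')) p).
Proof.
  intro H. destruct H as [hq hq0 hz0 ha0 hs hx H1 H2 H3 H4 H5].
  pose proof (qq_nz q hq) as Hq.
  set (J := S j').
  unfold cf1, cf2, Mf, ZZ, tt. cbv zeta.
  replace (S (j' + p) - J)%nat with p by (unfold J; lia).
  replace (S (j' + p) + J)%nat with ((J + J) + p)%nat by (unfold J; lia).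
  change (S (j' + p)) with (J + p)%nat. fold J.
  assert (hk1 : Csub Cone k <> Czero).
  { intro E. rewrite <- hs in E. pose proof (H1 1%nat) as a1. pose proof (H2 1%nat) as a2.
    simpl in a1, a2. apply (Cmul_nz _ _ a1 a2). rewrite <- E. field. }
  rewrite (Tn' s k q (J + p) hs hk1).
  rewrite !qp_qa.
  rewrite (qp_add z q J p), (qp_add (Cmul q k) q J p), (qp_add (Cdiv (Cmul q k) z) q J p).
  rewrite (qp_add q q j' p), (qp_add (Cmul q a) q (J + J) p), (qp_add (Cmul q a) q J J).
  assert (hkJ : Csub Cone (Cmul k (Cpow q (J + J))) <> Czero).
  { replace (J + J)%nat with (S (J + j')) by (unfold J; lia).
    replace (Cmul k (Cpow q (S (J + j')))) with (Cmul (Cmul q k) (Cpow q (J + j'))) by (rewrite Cpow_S; field).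
    apply qp_nz_factor; auto. }
  rewrite (qp_add k q (J + J) p), (Kk k q (J + J) hkJ), (qp_add (Cmul q k) q J J).
  rewrite (qp_arg (Cmul q (Cpow q j')) (Cpow q J)) by (unfold J; rewrite Cpow_S; field).
  rewrite (qp_arg (Cmul (Cmul k (Cpow q J)) (Cpow q J)) (Cmul k (Cpow q (J + J)))) by (rewrite Cpow_add; field).
  rewrite (qp_arg (Cmul (Cmul (Cmul z (Cpow q J)) (Cdiv (Cmul q a) z)) (Cpow q J)) (Cmul (Cmul q a) (Cpow q (J + J))))
    by (rewrite Cpow_add; field; auto).
  rewrite (qp_arg (Cmul (Cmul (Cdiv k a) (Cdiv (Cmul q a) z)) (Cpow q J)) (Cmul (Cdiv (Cmul q k) z) (Cpow q J)))
    by (field; auto).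
  rewrite (qp_arg (Cmul (Cmul (Cdiv k a) (Cmul z (Cpow q J))) (Cdiv (Cmul q a) z)) (Cmul (Cmul q k) (Cpow q J)))
    by (field; auto).
  rewrite (qp_arg (Cmul (Cmul z (Cpow q J)) (Cdiv (Cmul q a) z)) (Cmul (Cmul q a) (Cpow q J)))
    by (field; auto).
  rewrite (qp_arg (Cmul (Cdiv k a) (Cdiv (Cmul q a) z)) (Cdiv (Cmul q k) z)) by (field; auto).
  rewrite !Cpow_add.
  rewrite (qp_arg (Cmul (Cmul (Cdiv k a) (Cmul z (Cpow q J))) (Cdiv (Cmul q a) z)) (Cmul (Cmul q k) (Cpow q J)))
    by (field; auto).
  assert (hkJ' : Csub Cone (Cmul k (Cmul (Cpow q J) (Cpow q J))) <> Czero) by (rewrite <- Cpow_add; auto).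
  assert (Hx : forall n, qpoch (Cdiv (Cmul q a) z) q n <> Czero) by (apply qp_nz_small; auto).
  field. repeat split; auto; try apply qp_tail_nz; auto.
  - rewrite <- Cpow_add. apply qp_tail_nz; auto.
  - change (R1, R0) with Cone. replace (Cmul (Cmul k (Cpow q J)) (Cpow q J)) with (Cmul k (Cmul (Cpow q J) (Cpow q J))) by field. auto.
Qed.

Lemma bound_frac u nm dn v U NB DB V :
  dn <> Czero -> Cnorm u <= U -> Cnorm nm <= NB -> 0 < DB -> DB <= Cnorm dn -> Cnorm v <= V ->
  Cnorm (Cmul (Cmul u (Cdiv nm dn)) v) <= U * (NB / DB) * V.
Proof.
  intros Hd Hu Hn HD HDd Hv. rewrite !Cn_mul, Cn_div by auto.
  pose proof (Cn_ge0 u). pose proof (Cn_ge0 nm). pose proof (Cn_ge0 v).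
  apply Rmult_le_compat; try lra.
  - apply Rmult_le_pos; auto. apply Rmult_le_pos; auto. left. apply Rinv_0_lt_compat. lra.
  - apply Rmult_le_compat; try lra. apply Rmult_le_pos; auto. left. apply Rinv_0_lt_compat. lra.
    apply div_le; split; lra.
Qed.

Lemma norm4 a1 a2 a3 a4 : Cnorm (Cmul (Cmul (Cmul a1 a2) a3) a4) = Cnorm a1 * Cnorm a2 * Cnorm a3 * Cnorm a4.
Proof. rewrite !Cn_mul. reflexivity. Qed.

Lemma Cn_pow_le1 q n : Cnorm q < 1 -> Cnorm (Cpow q n) <= 1.
Proof. intro. rewrite Cn_pow. pose proof (Cn_ge0 q). assert (Cnorm q ^ n <= 1 ^ n) by (apply pow_incr; lra). rewrite pow1 in H1. auto. Qed.

Lemma tt_bound a k q z s : Hy a k q z s ->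
  exists Ct, forall j' p,
   Cnorm (tt (Cmul k (Cpow q (S j'))) (Cdiv k a) (Cmul z (Cpow q (S j'))) (Cdiv (Cmul q a) z) q (Cpow q (S j')) p)
   <= Ct * Cnorm (Cdiv (Cmul q a) z) ^ p.
Proof.
  intro H. destruct H as [hq hq0 hz0 ha0 hs hx H1 H2 H3 H4 H5].
  pose proof (qq_nz q hq) as Hq.
  destruct (qp_lb q q hq Hq) as [k1 [Hk1 Hb1]].
  destruct (qp_tail_lb _ q hq H5) as [k2 [Hk2 Hb2]].
  destruct (qp_tail_lb _ q hq H4) as [k3 [Hk3 Hb3]].
  destruct (qp_tail_lb _ q hq H3) as [k4 [Hk4 Hb4]].
  exists ((1 + Cnorm k) * ((Ub k q * Ub (Cdiv k a) q * Ub z q * Ub Cone q) / (k1 * k2 * k3 * k4))).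
  intros j' p. set (J := S j'). unfold tt.
  rewrite (qp_arg (Cmul (Cmul k (Cpow q J)) (Cpow q J)) (Cmul k (Cpow q (J + J)))) by (rewrite Cpow_add; field).
  rewrite (qp_arg (Cmul (Cmul (Cmul z (Cpow q J)) (Cdiv (Cmul q a) z)) (Cpow q J)) (Cmul (Cmul q a) (Cpow q (J + J))))
    by (rewrite Cpow_add; field; auto).
  rewrite (qp_arg (Cmul (Cmul (Cdiv k a) (Cdiv (Cmul q a) z)) (Cpow q J)) (Cmul (Cdiv (Cmul q k) z) (Cpow q J)))
    by (field; auto).
  rewrite (qp_arg (Cmul (Cmul (Cdiv k a) (Cmul z (Cpow q J))) (Cdiv (Cmul q a) z)) (Cmul (Cmul q k) (Cpow q J)))
    by (field; auto).
  rewrite <- Cn_pow. apply bound_frac.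
  - repeat apply Cmul_nz; auto; apply qp_tail_nz; auto.
  - eapply Rle_trans. apply Cn_sub. rewrite Cn_one. apply Rplus_le_compat_l.
    rewrite !Cn_mul. pose proof (Cn_pow_le1 q J hq). pose proof (Cn_pow_le1 q p hq).
    pose proof (Cn_ge0 k). pose proof (Cn_ge0 (Cpow q J)). pose proof (Cn_ge0 (Cpow q p)).
    assert (Cnorm k * Cnorm (Cpow q J) <= Cnorm k) by nra.
    assert (Cnorm k * Cnorm (Cpow q J) * Cnorm (Cpow q J) <= Cnorm k) by nra.
    assert (Cnorm k * Cnorm (Cpow q J) * Cnorm (Cpow q J) * Cnorm (Cpow q p) <= Cnorm k) by nra.
    nra.
  - rewrite norm4. apply prod4_le; split; try apply Cn_ge0.
    + apply qp_tail_ub; auto.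
    + apply qp_ub; auto.
    + apply qp_tail_ub; auto.
    + apply qp_ub_le; auto. rewrite Cn_one. apply Cn_pow_le1; auto.
  - repeat apply Rmult_lt_0_compat; auto.
  - rewrite norm4. apply prod4_le; split; try lra; auto.
  - lra.
Qed.

Lemma lb_frac u n1 n2 d1 d2 l1 l2 l3 u4 u5 :
  d1 <> Czero -> d2 <> Czero -> 0 < l1 -> 0 < l2 -> 0 < l3 -> 0 < u4 -> 0 < u5 ->
  l1 <= Cnorm u -> l2 <= Cnorm n1 -> l3 <= Cnorm n2 -> Cnorm d1 <= u4 -> Cnorm d2 <= u5 ->
  l1 * (l2 * l3 / (u4 * u5)) <= Cnorm (Cmul u (Cdiv (Cmul n1 n2) (Cmul d1 d2))).
Proof.
  intros. rewrite Cn_mul, Cn_div, !Cn_mul by (apply Cmul_nz; auto).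
  pose proof (Cn_pos _ H). pose proof (Cn_pos _ H0).
  apply Rmult_le_compat; try lra.
  - apply Rlt_le, Rdiv_lt_0_compat; apply Rmult_lt_0_compat; auto.
  - unfold Rdiv. apply Rmult_le_compat.
    apply Rmult_le_pos; lra. left; apply Rinv_0_lt_compat, Rmult_lt_0_compat; auto.
    apply Rmult_le_compat; lra.
    apply Rinv_le_contravar. apply Rmult_lt_0_compat; auto. apply Rmult_le_compat; lra.
Qed.

Lemma ZZ_lb a k q z s : Hy a k q z s ->
  exists LZ, 0 < LZ /\ forall j',
   LZ <= Cnorm (ZZ (Cmul k (Cpow q (S j'))) (Cdiv k a) (Cmul z (Cpow q (S j'))) (Cdiv (Cmul q a) z) q (S j')).
Proof.
  intro H. destruct H as [hq hq0 hz0 ha0 hs hx H1 H2 H3 H4 H5].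
  destruct (qp_tail_lb _ q hq H5) as [k2 [Hk2 Hb2]].
  destruct (qp_lb _ q hq H4) as [k3 [Hk3 Hb3]].
  destruct (qp_tail_lb _ q hq H3) as [k4 [Hk4 Hb4]].
  exists (k4 * (k2 * k3 / (Ub (Cmul q k) q * Ub (Cdiv (Cmul q a) z) q))). split.
  { apply Rmult_lt_0_compat; auto. apply Rdiv_lt_0_compat. nra. apply Rmult_lt_0_compat; apply Ub_pos. }
  intro j'. set (J := S j'). unfold ZZ.
  rewrite (qp_arg (Cmul (Cmul z (Cpow q J)) (Cdiv (Cmul q a) z)) (Cmul (Cmul q a) (Cpow q J))) by (field; auto).
  rewrite (qp_arg (Cmul (Cdiv k a) (Cdiv (Cmul q a) z)) (Cdiv (Cmul q k) z)) by (field; auto).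
  rewrite (qp_arg (Cmul (Cmul (Cdiv k a) (Cmul z (Cpow q J))) (Cdiv (Cmul q a) z)) (Cmul (Cmul q k) (Cpow q J)))
    by (field; auto).
  assert (Hx : forall n, qpoch (Cdiv (Cmul q a) z) q n <> Czero) by (apply qp_nz_small; auto).
  apply lb_frac; auto; try apply qp_tail_nz; auto; try apply Ub_pos.
  - pose proof (Hb4 (J + j')%nat 1%nat) as E.
    assert (Eq : qpoch (Cmul (Cmul q k) (Cpow q (J + j'))) q 1 = Csub Cone (Cmul (Cmul k (Cpow q J)) (Cpow q J))).
    { rewrite qp_S. change (qpoch (Cmul (Cmul q k) (Cpow q (J + j'))) q 0) with Cone.
      rewrite Cpow_add. unfold J. rewrite Cpow_S. change (Cpow q 0) with Cone. field. }
    rewrite Eq in E. exact E.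
  - apply qp_tail_ub; auto.
  - apply qp_ub; auto.
Qed.

Lemma Wsum a k q z s : Hy a k q z s -> forall j',
  Cconv (Cpartial (fun p => Cmul (cf1 a k q z s (j' + p)) (Mf a k q (S (j' + p)) (S j')))) (cf2 a q z j').
Proof.
  intros H j'. pose proof H as H'. destruct H' as [hq hq0 hz0 ha0 hs hx H1 H2 H3 H4 H5].
  set (J := S j').
  set (A0 := Cmul k (Cpow q J)). set (b := Cdiv k a). set (c := Cmul z (Cpow q J)).
  set (y := Cdiv (Cmul q a) z).
  assert (HS := sum6 A0 b c y q hq hq0 hx).
  assert (HZ : ZZ A0 b c y q J <> Czero).
  { destruct (ZZ_lb a k q z s H) as [LZ [HL HLb]]. intro E. specialize (HLb j'). fold J A0 b c y in HLb.
    rewrite E, Cn_zero in HLb. lra. }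
  specialize (HS ltac:(unfold A0, b, c, y; field; auto)).
  specialize (HS ltac:(intro i; unfold A0;
    replace (Cmul (Cmul k (Cpow q J)) (Cpow q i)) with (Cmul (Cmul q k) (Cpow q (j' + i))) by
      (unfold J; rewrite Cpow_add, Cpow_S; field);
    apply qp_nz_factor; auto)).
  specialize (HS ltac:(intro n; unfold c, y; rewrite (qp_arg _ (Cmul (Cmul q a) (Cpow q J))) by (field; auto);
    apply qp_tail_nz; auto)).
  specialize (HS ltac:(intro n; unfold b, y; rewrite (qp_arg _ (Cdiv (Cmul q k) z)) by (field; auto); auto)).
  specialize (HS ltac:(intro n; unfold b, c, y; rewrite (qp_arg _ (Cmul (Cmul q k) (Cpow q J))) by (field; auto);
    apply qp_tail_nz; auto)).
  specialize (HS J).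
  replace (cf2 a q z j') with (Cmul (Cdiv (cf2 a q z j') (ZZ A0 b c y q J)) (ZZ A0 b c y q J)) by (field; auto).
  apply (Cconv_ext (fun n => Cmul (Cdiv (cf2 a q z j') (ZZ A0 b c y q J)) (Cpartial (tt A0 b c y q (Cpow q J)) n))).
  { intro n. rewrite <- Cpartial_scal. apply Cpartial_ext. intros p _. symmetry. apply Weq; auto. }
  apply Cconv_scal. exact HS.
Qed.

Lemma Wbd a k q z s : Hy a k q z s -> exists C, 0 <= C /\ forall j' p,
  Cnorm (Cmul (cf1 a k q z s (j' + p)) (Mf a k q (S (j' + p)) (S j')))
  <= C * Cnorm (cf2 a q z j') * Cnorm (Cdiv (Cmul q a) z) ^ p.
Proof.
  intro H. destruct (tt_bound a k q z s H) as [Ct HCt]. destruct (ZZ_lb a k q z s H) as [LZ [HL HLb]].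
  assert (HCt0 : 0 <= Ct).
  { pose proof (HCt 0%nat 0%nat) as h. rewrite pow_O, Rmult_1_r in h. eapply Rle_trans; [apply Cn_ge0|exact h]. }
  exists (Ct / LZ). split. unfold Rdiv; apply Rmult_le_pos; [lra|left; apply Rinv_0_lt_compat; lra].
  intros j' p. rewrite Weq by auto. specialize (HLb j'). specialize (HCt j' p).
  set (Z := ZZ (Cmul k (Cpow q (S j'))) (Cdiv k a) (Cmul z (Cpow q (S j'))) (Cdiv (Cmul q a) z) q (S j')) in *.
  set (T := tt (Cmul k (Cpow q (S j'))) (Cdiv k a) (Cmul z (Cpow q (S j'))) (Cdiv (Cmul q a) z) q (Cpow q (S j')) p) in *.
  assert (HZ : Z <> Czero) by (intro E; rewrite E, Cn_zero in HLb; lra).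
  rewrite Cn_mul, Cn_div by auto.
  pose proof (Cn_ge0 (cf2 a q z j')) as a1. pose proof (Cn_ge0 T) as a2. pose proof (Cn_pos Z HZ) as a3.
  set (X := Cnorm (Cdiv (Cmul q a) z) ^ p) in *. set (C2 := Cnorm (cf2 a q z j')) in *.
  replace (Ct / LZ * C2 * X) with ((C2 / LZ) * (Ct * X)) by (field; lra).
  apply Rmult_le_compat; auto. unfold Rdiv; apply Rmult_le_pos; [lra|left; apply Rinv_0_lt_compat; lra].
  apply div_le; split; lra.
Qed.

Lemma scale_to0 (r : nat -> R) K : 0 <= K ->
  (forall eps, eps > 0 -> exists N, forall n, (n >= N)%nat -> r n < eps) ->
  forall eps, eps > 0 -> exists N, forall n, (n >= N)%nat -> K * r n < eps.
Proof.
  intros HK Hr eps He. destruct (Hr (eps / (K + 1))) as [N HN].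
  apply Rlt_gt, Rdiv_lt_0_compat; lra.
  exists N. intros n Hn. specialize (HN n Hn).
  destruct (Rle_lt_dec (r n) 0).
  - assert (K * r n <= 0) by nra. lra.
  - apply Rle_lt_trans with ((K + 1) * r n). nra.
    apply Rmult_lt_compat_l with (r := K + 1) in HN; [|lra].
    replace ((K + 1) * (eps / (K + 1))) with eps in HN by (field; lra). auto.
Qed.

Lemma main_core a k q z s (alpha beta : nat -> CC) :
  Hy a k q z s -> WP_Bailey_pair a k q alpha beta ->
  Cabs_conv (fun m => Cmul (cf2 a q z m) (alpha (S m))) ->
  Cconv (fun N => Csub (Csub (Cpartial (fun m => Cmul (cf1 a k q z s m) (beta (S m))) N)
                             (Cpartial (fun m => Cmul (cf2 a q z m) (alpha (S m))) N))
                       (Cpartial (f3d a k q z s) N)) Czero.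
Proof.
  intros H [Ha0 [Hb0 HWP]] [E HE].
  set (w := fun i j' => Cmul (cf1 a k q z s i) (Mf a k q (S i) (S j'))).
  assert (Dec : forall N, Csub (Csub (Cpartial (fun m => Cmul (cf1 a k q z s m) (beta (S m))) N)
                             (Cpartial (fun m => Cmul (cf2 a q z m) (alpha (S m))) N))
                       (Cpartial (f3d a k q z s) N)
     = Cpartial (fun j' => Cmul (alpha (S j')) (Csub (Cpartial (fun p => w (j' + p)%nat j') (N - j')) (cf2 a q z j'))) N).
  { intro N.
    assert (E1 : forall m, Cmul (cf1 a k q z s m) (beta (S m)) =
       Cadd (f3d a k q z s m) (Cpartial (fun j' => Cmul (w m j') (alpha (S j'))) (S m))).
    { intro m.
      assert (HW' : beta (S m) = Cpartial (fun j => Cmul (Mf a k q (S m) j) (alpha j)) (S (S m)))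
        by (exact (HWP (S m) ltac:(lia))).
      rewrite HW', (Cpartial_front (fun j => Cmul (Mf a k q (S m) j) (alpha j))), Ha0, <- (W0 a k q z s m H).
      transitivity (Cadd (Cmul (cf1 a k q z s m) (Mf a k q (S m) 0))
        (Cmul (cf1 a k q z s m) (Cpartial (fun i => Cmul (Mf a k q (S m) (S i)) (alpha (S i))) (S m)))).
      { field. }
      f_equal. rewrite <- Cpartial_scal. apply Cpartial_ext. intros. unfold w. field. }
    rewrite (Cpartial_ext _ _ N (fun m _ => E1 m)).
    rewrite Cpartial_add.
    rewrite (Cpartial_swap (fun m j' => Cmul (w m j') (alpha (S j'))) N).
    transitivity (Csub (Cpartial (fun j' => Cpartial (fun p => Cmul (w (j' + p)%nat j') (alpha (S j'))) (N - j')) N)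
       (Cpartial (fun m => Cmul (cf2 a q z m) (alpha (S m))) N)).
    { field. }
    rewrite <- Cpartial_sub. apply Cpartial_ext. intros j' _.
    rewrite <- (Cpartial_ext (fun p => Cmul (alpha (S j')) (w (j' + p)%nat j'))).
    rewrite Cpartial_scal. field. intros; field. }
  apply (Cconv_ext _ _ _ (fun N => eq_sym (Dec N))).
  destruct (Wbd a k q z s H) as [C [HC HCb]].
  set (rho := Cnorm (Cdiv (Cmul q a) z)).
  assert (Hr : 0 <= rho < 1) by (split; [apply Cn_ge0|exact (h_x _ _ _ _ _ H)]).
  apply Cconv_bound with (r := fun N => (C / (1 - rho)) * rpar (fun j => Cnorm (Cmul (cf2 a q z j) (alpha (S j))) * rho ^ (N - j)) N).
  - intro N. replace (Csub (Cpartial _ N) Czero) with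
      (Cpartial (fun j' => Cmul (alpha (S j')) (Csub (Cpartial (fun p => w (j' + p)%nat j') (N - j')) (cf2 a q z j'))) N) by field.
    eapply Rle_trans. apply Cpartial_norm. rewrite <- rpar_scal. apply rpar_le. intros j' Hj.
    rewrite Cn_mul.
    pose proof (tail_bound (fun p => w (j' + p)%nat j') (cf2 a q z j') (C * Cnorm (cf2 a q z j')) rho
       (Wsum a k q z s H j') Hr (HCb j') (N - j')%nat) as TB.
    rewrite Cn_mul. pose proof (Cn_ge0 (alpha (S j'))). pose proof (Cn_ge0 (cf2 a q z j')).
    apply Rle_trans with (Cnorm (alpha (S j')) * (C * Cnorm (cf2 a q z j') * rho ^ (N - j') / (1 - rho))).
    apply Rmult_le_compat_l; auto. right. field. lra.
  - apply scale_to0. unfold Rdiv. apply Rmult_le_pos; auto. left. apply Rinv_0_lt_compat. lra.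
    apply (conv_to0 _ E rho); auto. intros; apply Cn_ge0.
Qed.

Theorem lemma2p1 (a k q z s : CC) (alpha beta : nat -> CC)
  (hq : Cnorm q < 1)
  (hWP : WP_Bailey_pair a k q alpha beta)
  (hs : Cmul s s = k)
  (hz : Cnorm (Cmul q a) < Cnorm z)
  (ha0 : a <> Czero)
  (hd1 : forall n, qpoch s q n <> Czero)
  (hd2 : forall n, qpoch (Copp s) q n <> Czero)
  (hd3 : forall n, qpoch (Cmul q k) q n <> Czero)
  (hd4 : forall n, qpoch (Cdiv (Cmul q k) z) q n <> Czero)
  (hd5 : forall n, qpoch (Cmul q a) q n <> Czero)
  (hd6 : forall n, qpoch (Cdiv (Cmul q a) z) q n <> Czero) :
  let x := Cdiv (Cmul q a) z in
  let f1 := fun m : nat => let n := S m in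
    Cmul (Cmul (Cdiv (Cmul (Cmul (Cmul (qpoch (Cmul q s) q n) (qpoch (Copp (Cmul q s)) q n))
                                   (qpoch z q n)) (qpoch q q m))
                     (Cmul (Cmul (Cmul (qpoch s q n) (qpoch (Copp s) q n))
                                 (qpoch (Cmul q k) q n)) (qpoch (Cdiv (Cmul q k) z) q n)))
               (Cpow x n)) (beta n) in
  let f2 := fun m : nat => let n := S m in
    Cmul (Cmul (Cdiv (Cmul (qpoch z q n) (qpoch q q m))
                     (Cmul (qpoch (Cmul q a) q n) (qpoch (Cdiv (Cmul q a) z) q n)))
               (Cpow x n)) (alpha n) in
  let f3 := fun m : nat => let n := S m in
    Cmul (Cdiv (Cmul (Cmul (Cmul (Cmul (qpoch (Cmul q s) q n) (qpoch (Copp (Cmul q s)) q n))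
                                  (qpoch k q n)) (qpoch z q n)) (qpoch (Cdiv k a) q n))
               (Cmul (Cmul (Cmul (Cmul (Cmul (qpoch s q n) (qpoch (Copp s) q n))
                                       (qpoch (Cmul q k) q n)) (qpoch (Cdiv (Cmul q k) z) q n))
                           (qpoch (Cmul q a) q n))
                     (Csub Cone (Cpow q n))))
         (Cpow x n) in
  Cabs_conv f1 -> Cabs_conv f2 -> Cabs_conv f3 ->
  forall l1 l2 l3 : CC,
    Cseries_lim f1 l1 -> Cseries_lim f2 l2 -> Cseries_lim f3 l3 ->
    Csub l1 l2 = l3.
Proof.
  intros x f1 f2 f3 C1 C2 C3 l1 l2 l3 L1 L2 L3.
  assert (HL : Cconv (fun N => Csub (Csub (Cpartial f1 N) (Cpartial f2 N)) (Cpartial f3 N)) (Csub (Csub l1 l2) l3)).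
  { apply Cconv_sub. apply Cconv_sub. exact L1. exact L2. exact L3. }
  assert (Hz0 : z <> Czero).
  { intro E. rewrite E, Cn_zero in hz. pose proof (Cn_ge0 (Cmul q a)). lra. }
  assert (HD : Cconv (fun N => Csub (Csub (Cpartial f1 N) (Cpartial f2 N)) (Cpartial f3 N)) Czero).
  { destruct (Req_dec (Cnorm q) 0) as [Hq0|Hq0].
    - apply Cn_eq0 in Hq0.
      assert (Hx : x = Czero) by (unfold x; rewrite Hq0; field; auto).
      apply (Cconv_ext (fun _ => Czero)); [|apply Cconv_const].
      intro N. symmetry.
      rewrite (Cpartial_ext f1 (fun _ => Czero)), (Cpartial_ext f2 (fun _ => Czero)), (Cpartial_ext f3 (fun _ => Czero)).
      + assert (Z : forall n, Cpartial (fun _ => Czero) n = Czero).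
        { induction n. reflexivity. rewrite Cpartial_S, IHn. field. }
        rewrite !Z. field.
      + intros i _. unfold f3. cbv zeta. rewrite Hx, (Cpow_S Czero). unfold Cdiv. ring.
      + intros i _. unfold f2. cbv zeta. rewrite Hx, (Cpow_S Czero). unfold Cdiv. ring.
      + intros i _. unfold f1. cbv zeta. rewrite Hx, (Cpow_S Czero). unfold Cdiv. ring.
    - assert (H : Hy a k q z s).
      { constructor; auto.
        - intro E. apply Hq0. rewrite E. apply Cn_zero.
        - rewrite Cn_div by auto. pose proof (Cn_pos z Hz0). apply Rmult_lt_reg_r with (Cnorm z); auto.
          unfold Rdiv. rewrite Rmult_assoc, Rinv_l by lra. lra. }
      exact (main_core a k q z s alpha beta H hWP C2). }
  pose proof (Cconv_unique _ _ _ HL HD) as E.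
  replace l3 with (Cadd (Csub (Csub l1 l2) l3) l3) by (rewrite E; field). field.
Qed.
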